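(* The functor $\alpha\colon\mathrm{EMD}\to\mathrm{Ab}$, $(A,B,\phi,\psi)\mapsto A$, is full and essentially surjective, and reflects isomorphisms. For any $M,M'\in\mathrm{EMD}$ there is a natural short exact sequence \[ 0\to\mathrm{Hom}(\alpha(M)[2],\alpha(M')/2)\to\mathrm{EMD}(M,M')\xrightarrow{\alpha}\mathrm{Hom}(\alpha(M),\alpha(M'))\to0. \]
   Context: For an abelian group $U$, $U[2]=\{u:2u=0\}$ and $U/2=U/2U$. A Moore diagram is $(A,B,\phi,\psi)$ with abelian groups $A,B$, $\phi\colon A\to B$, $\psi\colon B\to A$, $\psi\phi=0$, $\phi\psi=2\cdot1_B$; morphisms are pairs $(f\colon A\to A',g\colon B\to B')$ with $g\phi=\phi'f$, $f\psi=\psi'g$. It is exact if the induced sequence $A/2\xrightarrow{\phi}B\xrightarrow{\psi}A[2]$ is short exact; $\mathrm{EMD}$ is the category of exact Moore diagrams, and $\alpha$ sends $(f,g)$ to $f$. *)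

(* Defs.v *)
From HB Require Import structures.
From mathcomp Require Import all_boot all_algebra.
From mathcomp Require Import boolp.
From mathcomp Require Import generic_quotient ring_quotient.

Set Implicit Arguments.
Unset Strict Implicit.
Unset Printing Implicit Defensive.
Import GRing.Theory.
Local Open Scope ring_scope.
Local Open Scope quotient_scope.
Import Quotient.

Section Tors2.
Variable U : zmodType.

Definition tors2_pred : {pred U} := fun x => x *+ 2 == 0.

Fact tors2_closed : zmod_closed tors2_pred.
Proof.
split; first by rewrite /tors2_pred unfold_in /= mul0rn.
move=> x y; rewrite !unfold_in /tors2_pred /= mulrnBl => /eqP -> /eqP ->.
by rewrite subr0.
Qed.

HB.instance Definition _ := GRing.isZmodClosed.Build U tors2_pred tors2_closed.

Definition tors2 := {x : U | x \in tors2_pred}.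
HB.instance Definition _ := [isSub of tors2 for @sval U (fun x => x \in tors2_pred)].
HB.instance Definition _ := [Choice of tors2 by <:].
HB.instance Definition _ := [SubChoice_isSubZmodule of tors2 by <:].

Definition twice_pred : {pred U} := fun x => `[< exists y, x = y *+ 2 >].

Fact twice_closed : zmod_closed twice_pred.
Proof.
split; first by rewrite unfold_in /twice_pred; apply/asboolP; exists 0; rewrite mul0rn.
move=> x y; rewrite !unfold_in /twice_pred => /asboolP [a ->] /asboolP [b ->].
by apply/asboolP; exists (a - b); rewrite mulrnBl.
Qed.

HB.instance Definition _ := GRing.isZmodClosed.Build U twice_pred twice_closed.

Definition mod2 := {quot (GRing.ZmodClosed.clone U twice_pred _)}.

End Tors2.

Definition is_hom (U V : zmodType) (f : U -> V) : Prop :=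
  forall x y, f (x + y) = f x + f y.

Definition tors2_map (U V : zmodType) (f : U -> V) : tors2 U -> tors2 V :=
  fun x => insubd (0 : tors2 V) (f (val x)).
Definition mod2_map (U V : zmodType) (f : U -> V) : mod2 U -> mod2 V :=
  fun x => \pi_(mod2 V) (f (repr x)).

Unset Implicit Arguments.

Record moore := Moore {
  mA : zmodType;
  mB : zmodType;
  mphi : mA -> mB;
  mpsi : mB -> mA }.
Arguments mphi : clear implicits.
Arguments mpsi : clear implicits.

Definition is_moore (M : moore) : Prop :=
  [/\ is_hom (mphi M), is_hom (mpsi M),
      (forall a, mpsi M (mphi M a) = 0) &
      (forall b, mphi M (mpsi M b) = b *+ 2)].

Definition phibar (M : moore) : mod2 (mA M) -> mB M :=
  fun x => mphi M (repr x).
Definition psibar (M : moore) : mB M -> tors2 (mA M) :=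
  fun b => insubd (0 : tors2 (mA M)) (mpsi M b).

(* A/2 --phi--> B --psi--> A[2] is short exact *)
Definition exact_moore (M : moore) : Prop :=
  [/\ injective (phibar M),
      (forall t : tors2 (mA M), exists b, psibar M b = t) &
      (forall b, psibar M b = 0 <-> exists x, phibar M x = b)].

Definition is_EMD (M : moore) : Prop := is_moore M /\ exact_moore M.

Definition is_EMD_mor (M M' : moore)
    (m : (mA M -> mA M') * (mB M -> mB M')) : Prop :=
  [/\ is_hom m.1, is_hom m.2,
      (forall a, m.2 (mphi M a) = mphi M' (m.1 a)) &
      (forall b, m.1 (mpsi M b) = mpsi M' (m.2 b))].

Definition mor_comp (M M' M'' : moore)
    (m' : (mA M' -> mA M'') * (mB M' -> mB M''))
    (m : (mA M -> mA M') * (mB M -> mB M')) :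
    (mA M -> mA M'') * (mB M -> mB M'') :=
  (fun a => m'.1 (m.1 a), fun b => m'.2 (m.2 b)).
Definition mor_id (M : moore) : (mA M -> mA M) * (mB M -> mB M) :=
  (fun a => a, fun b => b).

Definition mor_add (M M' : moore)
    (m1 m2 : (mA M -> mA M') * (mB M -> mB M')) :
    (mA M -> mA M') * (mB M -> mB M') :=
  (fun a => m1.1 a + m2.1 a, fun b => m1.2 b + m2.2 b).

Definition is_EMD_iso (M M' : moore)
    (m : (mA M -> mA M') * (mB M -> mB M')) : Prop :=
  is_EMD_mor M M' m /\
  exists m' : (mA M' -> mA M) * (mB M' -> mB M),
    [/\ is_EMD_mor M' M m', mor_comp M M' M m' m = mor_id M & mor_comp M' M M' m m' = mor_id M'].

Definition is_Ab_iso (U V : zmodType) (f : U -> V) : Prop :=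
  is_hom f /\ exists g : V -> U, [/\ is_hom g, cancel f g & cancel g f].

(* Main.v *)
Require Import Defs.
From HB Require Import structures.
From mathcomp Require Import all_boot all_algebra.
From mathcomp Require Import boolp classical_sets.
From mathcomp Require Import generic_quotient ring_quotient.
Import GRing.Theory.
Local Open Scope ring_scope.
Local Open Scope quotient_scope.
Set Implicit Arguments.
Unset Strict Implicit.

Section Basics.
Variable U : zmodType.
Definition pi2 (a : U) : mod2 U := \pi_(mod2 U) a.
Lemma pi2D a b : pi2 (a + b) = pi2 a + pi2 b.
Proof. by rewrite /pi2 !piE. Qed.
Lemma pi2_repr x : pi2 (repr x) = x.
Proof. exact: reprK. Qed.
Lemma pi2_eq a b : pi2 a = pi2 b <-> exists y, a - b = y *+ 2.
Proof.
rewrite /pi2; split.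
  move/eqP; rewrite -Quotient.idealrBE unfold_in /= /twice_pred.
  by move/asboolP.
move=> H; apply/eqP; rewrite -Quotient.idealrBE unfold_in /=; exact/asboolP.
Qed.
Lemma pi2_surj x : exists a, x = pi2 a.
Proof. by exists (repr x); rewrite pi2_repr. Qed.
Lemma pi20 : pi2 0 = 0.
Proof. by rewrite /pi2 piE. Qed.
Lemma valD_t (s t : tors2 U) : val (s + t) = val s + val t.
Proof. by []. Qed.
Lemma val0_t : val (0 : tors2 U) = 0.
Proof. by []. Qed.
Lemma tors2P (t : U) : t \in @tors2_pred U = (t *+ 2 == 0).
Proof. by rewrite unfold_in. Qed.
Lemma insubdK2 (t : U) : t *+ 2 = 0 -> val (insubd (0 : tors2 U) t) = t.
Proof. by move=> h; rewrite insubdK // tors2P h. Qed.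
Lemma valt2 (t : tors2 U) : val t *+ 2 = 0.
Proof. by apply/eqP; rewrite -tors2P; case: t. Qed.
End Basics.

Section Hom.
Variables (U V : zmodType) (f : U -> V) (hf : is_hom f).
Lemma hom0 : f 0 = 0.
Proof. by apply/(addrI (f 0)); rewrite -hf !addr0. Qed.
Lemma homN x : f (- x) = - f x.
Proof. by apply/(addrI (f x)); rewrite -hf !subrr hom0. Qed.
Lemma homB x y : f (x - y) = f x - f y.
Proof. by rewrite hf homN. Qed.
Lemma homMn x n : f (x *+ n) = f x *+ n.
Proof. by elim: n => [|n IH]; rewrite ?mulr0n ?hom0 // !mulrS hf IH. Qed.
End Hom.
Arguments hom0 {U V f}. Arguments homN {U V f}. Arguments homB {U V f}. Arguments homMn {U V f}.

Lemma hom_comp (U V W : zmodType) (f : U -> V) (g : V -> W) :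
  is_hom f -> is_hom g -> is_hom (fun x => g (f x)).
Proof. by move=> hf hg x y; rewrite hf hg. Qed.

Record facts (M : moore) : Prop := Facts {
  f_phi : is_hom (mphi M);
  f_psi : is_hom (mpsi M);
  f_psiphi : forall a, mpsi M (mphi M a) = 0;
  f_phipsi : forall b, mphi M (mpsi M b) = b *+ 2;
  f_kerphi : forall a, mphi M a = 0 -> exists y, a = y *+ 2;
  f_kerpsi : forall b, mpsi M b = 0 -> exists a, b = mphi M a;
  f_psisurj : forall t, t *+ 2 = 0 -> exists b, mpsi M b = t }.
Arguments f_phi {M}. Arguments f_psi {M}. Arguments f_psiphi {M}.
Arguments f_phipsi {M}. Arguments f_kerphi {M}. Arguments f_kerpsi {M}.
Arguments f_psisurj {M}.

Section FactsLemmas.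
Variables (M : moore) (F : facts M).
Local Notation phi := (mphi M).
Local Notation psi := (mpsi M).
Lemma phi2 a : phi (a *+ 2) = 0.
Proof.
have := f_phipsi F (phi a); rewrite f_psiphi // (hom0 (f_phi F)).
by rewrite -(homMn (f_phi F)) => <-.
Qed.
Lemma psi2 b : psi b *+ 2 = 0.
Proof. by rewrite -(homMn (f_psi F)) -(f_phipsi F) f_psiphi. Qed.
Lemma B4 (b : mB M) : b *+ 4 = 0.
Proof.
by rewrite (_ : 4%N = (2 * 2)%N) // mulrnA -(f_phipsi F b) -(homMn (f_phi F)) psi2 (hom0 (f_phi F)).
Qed.
Lemma phibar_pi a : phibar M (pi2 a) = phi a.
Proof.
rewrite /phibar; have [y hy] := proj1 (pi2_eq (repr (pi2 a)) a) (pi2_repr _).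
by apply/eqP; rewrite -subr_eq0 -(homB (f_phi F)) hy phi2.
Qed.
End FactsLemmas.

Lemma EMD_facts M : is_EMD M -> facts M.
Proof.
case=> [[hphi hpsi h1 h2] [inj sur ex]].
have F1 : forall a, mphi M (a *+ 2) = 0.
  by move=> a; rewrite (homMn hphi) -h2 h1 (hom0 hphi).
have Hpb : forall a, phibar M (pi2 a) = mphi M a.
  move=> a; rewrite /phibar; have [y hy] := proj1 (pi2_eq (repr (pi2 a)) a) (pi2_repr _).
  by apply/eqP; rewrite -subr_eq0 -homB // hy F1.
have P2 : forall b, mpsi M b *+ 2 = 0.
  by move=> b; rewrite -homMn // -h2 h1.
split=> //.
- move=> a ha; have : pi2 a = pi2 0.
    by apply: inj; rewrite !Hpb ha hom0.
  by case/pi2_eq => y; rewrite subr0; exists y.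
- move=> b hb; have : psibar M b = 0.
    by apply: val_inj; rewrite /psibar insubdK2 ?P2.
  case/ex => x <-; by exists (repr x).
- move=> t ht; have [b hb] := sur (insubd 0 t).
  exists b; move: hb => /(congr1 val); rewrite insubdK2 // /psibar insubdK2 //.
Qed.

Lemma facts_EMD M : facts M -> is_EMD M.
Proof.
move=> F; split; first by case: F.
split.
- move=> x y; case: (pi2_surj x) => a ->; case: (pi2_surj y) => b ->.
  rewrite !(phibar_pi F) => h; apply/pi2_eq; apply: (f_kerphi F).
  by rewrite (homB (f_phi F)) h subrr.
- move=> t; have [b hb] := f_psisurj F _ (valt2 t).
  by exists b; apply: val_inj; rewrite /psibar insubdK2 ?(psi2 F).
- move=> b; split.
    move=> /(congr1 val); rewrite /psibar insubdK2 ?(psi2 F) // => /(f_kerpsi F) [a ->].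
    by exists (pi2 a); rewrite (phibar_pi F).
  case=> x <-; case: (pi2_surj x) => a ->; rewrite (phibar_pi F).
  by apply: val_inj; rewrite /psibar insubdK2 ?(psi2 F) // f_psiphi.
Qed.

Section ChainHelp.
Local Open Scope classical_set_scope.
Lemma chain_pick T (G0 : set T) (F : set (set T)) (Q : set T -> Prop) :
  total_on F subset -> (forall X, F X -> Q X) -> Q set0 ->
  forall p1 p2, (G0 `|` \bigcup_(X in F) X) p1 -> (G0 `|` \bigcup_(X in F) X) p2 ->
  exists X, [/\ Q X, X `<=` \bigcup_(X in F) X, (G0 `|` X) p1 & (G0 `|` X) p2].
Proof.
move=> tot QF Q0 p1 p2 h1 h2.
have sub X : F X -> X `<=` \bigcup_(X in F) X by move=> FX x Xx; exists X.
case: h1 => [g1|[X1 FX1 X1p1]]; case: h2 => [g2|[X2 FX2 X2p2]].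
- by exists set0; split => //; left.
- by exists X2; split; [exact: QF|exact: sub|left|right].
- by exists X1; split; [exact: QF|exact: sub|right|left].
- case: (tot _ _ FX1 FX2) => s.
    by exists X2; split; [exact: QF|exact: sub|right; apply: s|right].
  by exists X1; split; [exact: QF|exact: sub|right|right; apply: s].
Qed.
End ChainHelp.

Section Full.
Local Open Scope classical_set_scope.
Variables (M M' : moore) (F : facts M) (F' : facts M').
Variables (f : mA M -> mA M') (hf : is_hom f).
Local Notation phi := (mphi M).
Local Notation psi := (mpsi M).
Local Notation phi' := (mphi M').
Local Notation psi' := (mpsi M').
Local Notation B := (mB M).
Local Notation B' := (mB M').

Definition G0 : set (B * B') := [set p | exists a, p = (phi a, phi' (f a))].
Definition Good (H : set (B * B')) : Prop :=
  [/\ (forall x p q, H (x, p) -> H (x, q) -> p = q),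
      (forall x y p q, H (x, p) -> H (y, q) -> H (x + y, p + q)) &
      (forall x p, H (x, p) -> psi' p = f (psi x))].

Lemma Good_G0 : Good G0.
Proof.
split.
- move=> x p q [a [-> ->]] [a' [ea ->]].
  have [y hy] : exists y, a - a' = y *+ 2.
    by apply: (f_kerphi F); rewrite (homB (f_phi F)) ea subrr.
  apply/eqP; rewrite -subr_eq0 -(homB (f_phi F')) -(homB hf) hy (homMn hf).
  by rewrite (phi2 F').
- move=> x y p q [a [-> ->]] [a' [-> ->]]; exists (a + a').
  by rewrite (f_phi F) hf (f_phi F').
- move=> x p [a [-> ->]]; by rewrite (f_psiphi F') (f_psiphi F) (hom0 hf).
Qed.

Lemma Good_neg H : Good H -> forall x p, H (x, p) -> H (- x, - p).
Proof.
case=> _ hA _ x p hxp.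
have e3 (U : zmodType) (u : U) : u *+ 4 = 0 -> - u = u + u + u.
  move=> h; apply/eqP; rewrite eq_sym -subr_eq0 opprK.
  by rewrite -h !mulrS mulr0n addr0 !addrA.
rewrite (e3 _ x (B4 F x)) (e3 _ p (B4 F' p)).
by apply: (hA) => //; apply: (hA).
Qed.

Lemma Good_sub H : Good H -> forall x y p q, H (x, p) -> H (y, q) -> H (x - y, p - q).
Proof.
move=> hG x y p q h1 h2; case: (hG) => _ hA _; apply: hA => //.
exact: Good_neg.
Qed.

Section Ext.
Variables (H : set (B * B')) (GH : Good H) (G0H : G0 `<=` H).
Variables (b : B) (b' : B') (nb : ~ exists p, H (b, p)) (hb' : psi' b' = f (psi b)).
Definition Nset : set (B * B') := [set xp | exists y q, H (y, q) /\ xp = (y + b, q + b')].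

Lemma Good_ext : Good (H `|` Nset).
Proof.
case: (GH) => hF hA hP.
have H0 : H (0, 0).
  by apply: G0H; exists 0; rewrite (hom0 (f_phi F)) (hom0 hf) (hom0 (f_phi F')).
split.
- move=> x p q [h1|[y1 [q1 [h1 [e1 e1']]]]] [h2|[y2 [q2 [h2 [e2 e2']]]]].
  + exact: hF h1 h2.
  + exfalso; apply: nb; exists (p - q2).
    have := Good_sub GH h1 h2; rewrite e2.
    by rewrite addrAC subrr add0r.
  + exfalso; apply: nb; exists (q - q1).
    have := Good_sub GH h2 h1; rewrite e1.
    by rewrite addrAC subrr add0r.
  + subst; move: e2; move/addIr => e; subst.
    by rewrite (hF _ _ _ h1 h2).
- move=> x y p q [h1|[y1 [q1 [h1 [e1 e1']]]]] [h2|[y2 [q2 [h2 [e2 e2']]]]].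
  + by left; apply: hA.
  + right; exists (x + y2), (p + q2); split; first exact: hA.
    by subst; rewrite !addrA.
  + right; exists (y1 + y), (q1 + q); split; first exact: hA.
    by subst; rewrite addrAC [q1 + b' + q]addrAC.
  + left; subst.
    have hb : H (phi (psi b), phi' (f (psi b))) by apply: G0H; exists (psi b).
    have := hA _ _ _ _ (hA _ _ _ _ h1 h2) hb.
    rewrite (f_phipsi F) -hb' (f_phipsi F').
    by rewrite !mulr2n addrACA [q1 + b' + _]addrACA.
- move=> x p [h|[y [q [h [-> ->]]]]]; first exact: hP.
  by rewrite (f_psi F') (hP _ _ h) hb' (f_psi F) hf.
Qed.
End Ext.

Lemma full_exists : exists g : B -> B', is_EMD_mor M M' (f, g).
Proof.
pose P := fun G => Good (G0 `|` G).
have [A [PA maxA]] : exists A, P A /\ forall C, A `<` C -> ~ P C.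
  apply: Zorn_bigcup => Fm FP tot.
  rewrite /P; split.
  - move=> x p q h1 h2.
    have [X [QX _ h1' h2']] := chain_pick tot FP (ltac:(by rewrite /P setU0; exact: Good_G0)) h1 h2.
    by case: QX => hF _ _; apply: hF h1' h2'.
  - move=> x y p q h1 h2.
    have [X [QX sX h1' h2']] := chain_pick tot FP (ltac:(by rewrite /P setU0; exact: Good_G0)) h1 h2.
    case: QX => _ hA _; case: (hA _ _ _ _ h1' h2') => h; [left|right]; first done.
    exact: sX.
  - move=> x p h1.
    have [X [QX _ h1' _]] := chain_pick tot FP (ltac:(by rewrite /P setU0; exact: Good_G0)) h1 h1.
    by case: QX => _ _ hP; apply: hP h1'.
have dom : forall x, exists p, (G0 `|` A) (x, p).
  move=> b; case: (pselect (exists p, (G0 `|` A) (b, p))) => // nb; exfalso.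
  have [b' hb'] : exists b', psi' b' = f (psi b).
    by apply: (f_psisurj F'); rewrite -(homMn hf) (psi2 F) (hom0 hf).
  apply: (maxA (A `|` Nset (G0 `|` A) b b')).
    split; first by move=> z hz; left.
    move=> sub.
    have h0 : (G0 `|` A) (0, 0).
      by left; exists 0; rewrite (hom0 (f_phi F)) (hom0 hf) (hom0 (f_phi F')).
    have : (A `|` Nset (G0 `|` A) b b') (0 + b, 0 + b').
      by right; exists 0, 0.
    by move/sub => hA; apply: nb; exists (0 + b'); rewrite add0r in hA *; right.
  rewrite /P setUA.
  apply: Good_ext => //; by move=> z hz; left.
pose g x := projT1 (cid (dom x)).
have hg x : (G0 `|` A) (x, g x) := projT2 (cid (dom x)).
case: PA => hF hA hP.
exists g; split => //=.
- by move=> x y; apply: hF (hg _) (hA _ _ _ _ (hg x) (hg y)).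
- by move=> a; apply: hF (hg _) _; left; exists a.
- by move=> x; rewrite (hP _ _ (hg x)).
Qed.
End Full.

Section Bilin.
Local Open Scope classical_set_scope.
Variables (V W : zmodType) (hV : forall v : V, v + v = 0) (hW : forall w : W, w + w = 0).
Variables (th : V -> W) (hth : is_hom th).
Local Notation T := ((V * V) * W)%type.

Definition BG0 : set T := [set ((0, 0), 0)].
Record BGood (H : set T) : Prop := BGoodI {
  bF : forall x y w w', H ((x, y), w) -> H ((x, y), w') -> w = w';
  bD1 : forall x y w, H ((x, y), w) -> (exists w1, H ((x, x), w1)) /\ (exists w2, H ((y, y), w2));
  bD2 : forall x y w1 w2, H ((x, x), w1) -> H ((y, y), w2) -> exists w, H ((x, y), w);
  bR : forall x y z w1 w2, H ((x, y), w1) -> H ((x, z), w2) -> H ((x, y + z), w1 + w2);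
  bL : forall x y z w1 w2, H ((x, z), w1) -> H ((y, z), w2) -> H ((x + y, z), w1 + w2);
  bD : forall x w, H ((x, x), w) -> w = th x }.

Lemma negV (v : V) : - v = v.
Proof. by apply/eqP; rewrite eq_sym -subr_eq0 opprK hV. Qed.

Lemma BGood_G0 : BGood BG0.
Proof.
split.
- by move=> x y w w' h1 h2; case: h1 => *; case: h2 => *; subst.
- by move=> x y w h1; case: h1 => *; subst; split; exists 0.
- by move=> x y w1 w2 h1 h2; case: h1 => *; case: h2 => *; subst; exists 0.
- move=> x y z w1 w2 h1 h2; case: h1 => *; case: h2 => *; subst.
  by rewrite /BG0 /= !addr0.
- move=> x y z w1 w2 h1 h2; case: h1 => *; case: h2 => *; subst.
  by rewrite /BG0 /= !addr0.
- by move=> x w h1; case: h1 => *; subst; rewrite (hom0 hth).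
Qed.

Section BExt.
Variables (H : set T) (GH : BGood H) (G0H : BG0 `<=` H).
Definition UH (x : V) := exists w, H ((x, x), w).
Lemma UH_add x y : UH x -> UH y -> UH (x + y).
Proof.
case: GH => hF hD1 hD2 hR hL hD [w1 h1] [w2 h2].
have [wa ha] := hD2 _ _ _ _ h1 h2.
have [wb hb] := hD2 _ _ _ _ h2 h1.
have h3 := hL _ _ _ _ _ h1 hb.
have h4 := hL _ _ _ _ _ ha h2.
by eexists; apply: hR h3 h4.
Qed.
Lemma UH_dom x y w : H ((x, y), w) -> UH x /\ UH y.
Proof. by case: GH => _ hD1 _ _ _ _ /hD1. Qed.

Variables (v : V) (nv : ~ UH v).
Definition sel (i : bool) : V := if i then v else 0.
Definition selw (i : bool) : W := if i then th v else 0.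
Definition BN : set T := [set p | exists x0 y0 w0 (i j : bool),
  H ((x0, y0), w0) /\ p = ((x0 + sel i, y0 + sel j), w0 + selw (i && j))].

Lemma sel_uniq x0 x1 i i' : UH x0 -> UH x1 -> x0 + sel i = x1 + sel i' -> i = i' /\ x0 = x1.
Proof.
move=> u0 u1 e.
case: i i' e => [] [] /= e; try by split => //; apply: addIr e.
- exfalso; apply: nv; rewrite addr0 in e.
  have -> : v = x1 - x0 by rewrite -e addrAC subrr add0r.
  by rewrite negV; apply: UH_add.
- exfalso; apply: nv; rewrite addr0 in e.
  have -> : v = x0 - x1 by rewrite e addrAC subrr add0r.
  by rewrite negV; apply: UH_add.
Qed.

Lemma H_BN : H `<=` BN.
Proof.
by move=> [[x y] w] h; exists x, y, w, false, false; split => //=; rewrite !addr0.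
Qed.

Lemma selD j k : sel j + sel k = sel (j (+) k).
Proof. by case: j k => [] [] /=; rewrite ?addr0 ?add0r ?hV. Qed.
Lemma selwD i j k : selw (i && j) + selw (i && k) = selw (i && (j (+) k)).
Proof. by case: i j k => [] [] [] /=; rewrite ?addr0 ?add0r ?hW. Qed.
Lemma selwD' i j k : selw (i && k) + selw (j && k) = selw ((i (+) j) && k).
Proof. by case: i j k => [] [] [] /=; rewrite ?addr0 ?add0r ?hW. Qed.

Lemma BGood_ext : BGood BN.
Proof.
case: (GH) => hF hD1 hD2 hR hL hD.
split.
- move=> x y w w' [x0 [y0 [w0 [i [j [h0 e0]]]]]] [x1 [y1 [w1 [i' [j' [h1 e1]]]]]].
  case: e0 => ex ey ew; case: e1 => ex' ey' ew'.
  have [u0 u0'] := UH_dom h0; have [u1 u1'] := UH_dom h1.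
  have [ei ex1] := sel_uniq u0 u1 (etrans (esym ex) ex').
  have [ej ey1] := sel_uniq u0' u1' (etrans (esym ey) ey').
  subst; by rewrite (hF _ _ _ _ h0 h1).
- move=> x y w [x0 [y0 [w0 [i [j [h0 e0]]]]]]; case: e0 => -> -> _.
  case: (hD1 _ _ _ h0) => [[w1 h1] [w2 h2]]; split.
    by exists (w1 + selw (i && i)), x0, x0, w1, i, i.
  by exists (w2 + selw (j && j)), y0, y0, w2, j, j.
- move=> x y w1 w2 [x0 [y0 [w0 [i [j [h0 e0]]]]]] [x1 [y1 [w1' [i' [j' [h1 e1]]]]]].
  case: e0 => ex ex' _; case: e1 => ey ey' _.
  have [u0 u0'] := UH_dom h0; have [u1 u1'] := UH_dom h1.
  have [eij exx] := sel_uniq u0 u0' (etrans (esym ex) ex').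
  have [eij' eyy] := sel_uniq u1 u1' (etrans (esym ey) ey').
  subst.
  have [w hw] := hD2 _ _ _ _ h0 h1.
  by exists (w + selw (j && j')), y0, y1, w, j, j'.
- move=> x y z w1 w2 [x0 [y0 [w0 [i [j [h0 e0]]]]]] [x1 [z1 [w1' [i' [k [h1 e1]]]]]].
  case: e0 => ex ey ew; case: e1 => ex' ez ew'.
  have [u0 _] := UH_dom h0; have [u1 _] := UH_dom h1.
  have [ei ex1] := sel_uniq u0 u1 (etrans (esym ex) ex').
  subst.
  exists x1, (y0 + z1), (w0 + w1'), i', (j (+) k); split; first exact: hR h0 h1.
  by rewrite addrACA selD addrACA selwD.
- move=> x y z w1 w2 [x0 [z0 [w0 [i [k [h0 e0]]]]]] [y1 [z1 [w1' [j [k' [h1 e1]]]]]].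
  case: e0 => ex ez ew; case: e1 => ey ez' ew'.
  have [_ u0] := UH_dom h0; have [_ u1] := UH_dom h1.
  have [ek ez1] := sel_uniq u0 u1 (etrans (esym ez) ez').
  subst.
  exists (x0 + y1), z1, (w0 + w1'), (i (+) j), k'; split; first exact: hL h0 h1.
  by rewrite addrACA selD addrACA selwD'.
- move=> x w [x0 [y0 [w0 [i [j [h0 e0]]]]]].
  case: e0 => ex ey ew.
  have [u0 u0'] := UH_dom h0.
  have [eij exy] := sel_uniq u0 u0' (etrans (esym ex) ey).
  rewrite -exy in h0; rewrite ew ex -eij (hD _ _ h0) andbb hth.
  by case: (i) => //=; rewrite (hom0 hth) addr0.
Qed.
End BExt.

Lemma bilin_exists : exists c : V -> V -> W,
  [/\ (forall x y z, c x (y + z) = c x y + c x z),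
      (forall x y z, c (x + y) z = c x z + c y z) &
      (forall x, c x x = th x)].
Proof.
pose P := fun G => BGood (BG0 `|` G).
have G0ok : P set0 by rewrite /P setU0; exact: BGood_G0.
have [A [PA maxA]] : exists A, P A /\ forall C, A `<` C -> ~ P C.
  apply: Zorn_bigcup => Fm FP tot.
  rewrite /P; split.
  - move=> x y w w' h1 h2.
    have [X [QX _ h1' h2']] := chain_pick tot FP G0ok h1 h2.
    by case: QX => hF _ _ _ _ _; apply: hF h1' h2'.
  - move=> x y w h1.
    have [X [QX sX h1' _]] := chain_pick tot FP G0ok h1 h1.
    case: QX => _ hD1 _ _ _ _; case: (hD1 _ _ _ h1') => [[w1 k1] [w2 k2]].
    split; [exists w1|exists w2]; (case: k1 => [?|?]; [by left|]) ||
      (case: k2 => [?|?]; [by left|]); by right; apply: sX.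
  - move=> x y w1 w2 h1 h2.
    have [X [QX sX h1' h2']] := chain_pick tot FP G0ok h1 h2.
    case: QX => _ _ hD2 _ _ _; case: (hD2 _ _ _ _ h1' h2') => w [k|k];
      exists w; [by left|by right; apply: sX].
  - move=> x y z w1 w2 h1 h2.
    have [X [QX sX h1' h2']] := chain_pick tot FP G0ok h1 h2.
    case: QX => _ _ _ hR _ _; case: (hR _ _ _ _ _ h1' h2') => k; [by left|by right; apply: sX].
  - move=> x y z w1 w2 h1 h2.
    have [X [QX sX h1' h2']] := chain_pick tot FP G0ok h1 h2.
    case: QX => _ _ _ _ hL _; case: (hL _ _ _ _ _ h1' h2') => k; [by left|by right; apply: sX].
  - move=> x w h1.
    have [X [QX _ h1' _]] := chain_pick tot FP G0ok h1 h1.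
    by case: QX => _ _ _ _ _ hD; apply: hD h1'.
have G0A : BG0 `<=` BG0 `|` A by move=> z hz; left.
have allU : forall x, UH (BG0 `|` A) x.
  move=> v; case: (pselect (UH (BG0 `|` A) v)) => // nv; exfalso.
  have sN := H_BN (H := BG0 `|` A) v.
  apply: (maxA (A `|` BN (BG0 `|` A) v)).
    split; first by move=> z hz; left.
    move=> sub; apply: nv; exists (0 + th v); right.
    have : (A `|` BN (BG0 `|` A) v) ((v, v), 0 + th v).
      right; exists 0, 0, 0, true, true; split; first by left.
      by rewrite /= !add0r.
    move/sub => //.
  rewrite /P; have -> : BG0 `|` (A `|` BN (BG0 `|` A) v) = BN (BG0 `|` A) v.
    apply/seteqP; split.
      by move=> z [hz|[hz|hz]] //; apply: sN; [left|right].
    by move=> z hz; right; right.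
  exact: (BGood_ext PA nv).
case: (PA) => hF hD1 hD2 hR hL hD.
have dom : forall x y, exists w, (BG0 `|` A) ((x, y), w).
  by move=> x y; case: (allU x) => w1 h1; case: (allU y) => w2 h2; apply: hD2 h1 h2.
pose c x y := projT1 (cid (dom x y)).
have hc x y : (BG0 `|` A) ((x, y), c x y) := projT2 (cid (dom x y)).
exists c; split.
- by move=> x y z; apply: hF (hc _ _) (hR _ _ _ _ _ (hc x y) (hc x z)).
- by move=> x y z; apply: hF (hc _ _) (hL _ _ _ _ _ (hc x z) (hc y z)).
- by move=> x; apply: hD.
Qed.
End Bilin.

Section Twist.
Variable U : zmodType.
Local Notation V := (tors2 U).
Local Notation W := (mod2 U).

Lemma hV2 (v : V) : v + v = 0.
Proof. by apply: val_inj; rewrite valD_t -mulr2n valt2. Qed.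
Lemma hW2 (w : W) : w + w = 0.
Proof.
case: (pi2_surj w) => a ->; rewrite -pi2D -pi20; apply/pi2_eq.
by exists a; rewrite subr0 mulr2n.
Qed.
Definition thU (t : V) : W := pi2 (val t).
Lemma hthU : is_hom thU.
Proof. by move=> s t; rewrite /thU valD_t pi2D. Qed.

Definition cU : V -> V -> W := projT1 (cid (bilin_exists hV2 hW2 hthU)).
Lemma cU_spec : [/\ (forall x y z, cU x (y + z) = cU x y + cU x z),
      (forall x y z, cU (x + y) z = cU x z + cU y z) &
      (forall x, cU x x = thU x)].
Proof. exact: projT2 (cid (bilin_exists hV2 hW2 hthU)). Qed.
Lemma cUR x y z : cU x (y + z) = cU x y + cU x z. Proof. by case: cU_spec. Qed.
Lemma cUL x y z : cU (x + y) z = cU x z + cU y z. Proof. by case: cU_spec. Qed.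
Lemma cUD x : cU x x = thU x. Proof. by case: cU_spec. Qed.
Lemma negW (w : W) : - w = w.
Proof. by apply/eqP; rewrite eq_sym -subr_eq0 opprK hW2. Qed.
Lemma cU0l x : cU 0 x = 0.
Proof. by apply/(addrI (cU 0 x)); rewrite -cUL !addr0. Qed.
Lemma cU0r x : cU x 0 = 0.
Proof. by apply/(addrI (cU x 0)); rewrite -cUR !addr0. Qed.
Lemma cUC x y : cU x y = cU y x.
Proof.
have := cUD (x + y); rewrite cUL !cUR !cUD /thU valD_t pi2D -/(thU x) -/(thU y).
have AC4 (Z : zmodType) (a p q b : Z) : a + p + (q + b) = (p + q) + (a + b).
  by rewrite [a + p]addrC addrACA.
rewrite AC4 -[X in _ = X]add0r => /addIr /eqP; rewrite addr_eq0 negW => /eqP.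
done.
Qed.
End Twist.

Definition TW (U : zmodType) := (mod2 U * tors2 U)%type.
HB.instance Definition _ (U : zmodType) := Choice.copy (TW U) (mod2 U * tors2 U)%type.

Section TwOps.
Variable U : zmodType.
Definition tzero : TW U := (0, 0).
Definition tadd (p q : TW U) : TW U := (p.1 + q.1 + cU p.2 q.2, p.2 + q.2).
Definition topp (p : TW U) : TW U := (- p.1 + cU p.2 p.2, - p.2).

Lemma taddA : associative tadd.
Proof.
move=> [x s] [y t] [z u]; rewrite /tadd /=; congr pair; last by rewrite addrA.
rewrite cUL cUR !addrA [RHS]addrAC; congr (_ + _).
by rewrite [LHS]addrAC; congr (_ + _); rewrite addrAC.
Qed.
Lemma taddC : commutative tadd.
Proof. by move=> [x s] [y t]; rewrite /tadd /=; congr pair; [rewrite cUC [x + y]addrC | exact: addrC]. Qed.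
Lemma tadd0 : left_id tzero tadd.
Proof. by move=> [x s]; rewrite /tadd /= cU0l !add0r addr0. Qed.
Lemma taddN : left_inverse tzero topp tadd.
Proof.
move=> [x s]; rewrite /tadd /topp /= addNr; congr pair.
by rewrite [- x + _ + x]addrAC addNr add0r (negV (@hV2 U) s) hW2.
Qed.
End TwOps.

HB.instance Definition _ (U : zmodType) :=
  GRing.isZmodule.Build (TW U) (@taddA U) (@taddC U) (@tadd0 U) (@taddN U).

Section EssSurj.
Variable U : zmodType.
Definition tphi (a : U) : TW U := (pi2 a, 0).
Definition tpsi (p : TW U) : U := val p.2.
Definition MU : moore := @Moore U (GRing.Zmodule.clone (TW U) _) tphi tpsi.
Lemma twaddE (p q : TW U) : p + q = (p.1 + q.1 + cU p.2 q.2, p.2 + q.2).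
Proof. by []. Qed.
Lemma tw0E : (0 : TW U) = (0, 0).
Proof. by []. Qed.

Lemma MU_facts : facts MU.
Proof.
split => /=.
- by move=> a b; rewrite /tphi twaddE /= pi2D cU0l !addr0.
- by move=> p q; rewrite /tpsi twaddE.
- by move=> a; rewrite /tpsi /tphi /=.
- move=> [x s]; rewrite /tphi /tpsi mulr2n twaddE /= hW2 add0r cUD hV2.
  by [].
- move=> a; rewrite /tphi tw0E => h.
  have h1 : pi2 a = pi2 0 by rewrite pi20; case: h.
  by have [y] := proj1 (pi2_eq a 0) h1; rewrite subr0; exists y.
- move=> [x s]; rewrite /tpsi /= => hs.
  have -> : s = 0 by apply: val_inj.
  by exists (repr x); rewrite /tphi pi2_repr.
- move=> t ht; exists (0, insubd 0 t); by rewrite /tpsi /= insubdK2.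
Qed.

Lemma ess_surj : exists M : moore, is_EMD M /\ exists f : mA M -> U, is_Ab_iso (mA M) U f.
Proof.
exists MU; split; first exact: facts_EMD MU_facts.
by exists id; split => //; exists id.
Qed.
End EssSurj.

Lemma funext2 (A B : Type) (f g : A -> B) : (forall x, f x = g x) -> f = g.
Proof. exact: functional_extensionality_dep. Qed.

Section Reflect.
Variables (M M' : moore) (F : facts M) (F' : facts M').
Variables (m : (mA M -> mA M') * (mB M -> mB M')) (hm : is_EMD_mor M M' m).
Variables (hiso : is_Ab_iso (mA M) (mA M') m.1).

Lemma reflect_iso : is_EMD_iso M M' m.
Proof.
split => //.
case: m hm hiso => f g [/= hf hg hgphi hfpsi] [_ [finv [hfinv fK finvK]]].
have finj : injective f := can_inj fK.
have g0 : forall x, g x = 0 -> x = 0.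
  move=> x gx.
  have : f (mpsi M x) = f 0 by rewrite hfpsi gx (hom0 (f_psi F')) (hom0 hf).
  move/finj/(f_kerpsi F) => [a ea]; subst x.
  move: gx; rewrite hgphi => /(f_kerphi F') [y ey].
  have -> : a = finv y *+ 2 by rewrite -(homMn hfinv) -ey fK.
  exact: phi2.
have ginj : injective g.
  move=> x y e; apply/eqP; rewrite -subr_eq0; apply/eqP/g0.
  by rewrite (homB hg) e subrr.
have gsurj : forall b', exists b, g b = b'.
  move=> b'.
  have ht : finv (mpsi M' b') *+ 2 = 0.
    by rewrite -(homMn hfinv) (psi2 F') (hom0 hfinv).
  have [b0 hb0] := f_psisurj F _ ht.
  have : mpsi M' (b' - g b0) = 0.
    by rewrite (homB (f_psi F')) -hfpsi hb0 finvK subrr.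
  move/(f_kerpsi F') => [a' ea'].
  exists (b0 + mphi M (finv a')); rewrite hg hgphi finvK -ea'.
  by rewrite addrC subrK.
pose ginv b' := projT1 (cid (gsurj b')).
have ginvK : cancel ginv g by move=> b'; exact: projT2 (cid (gsurj b')).
have gK : cancel g ginv by move=> b; apply: ginj; rewrite ginvK.
exists (finv, ginv); split.
- split => //=.
  + by move=> x y; apply: ginj; rewrite hg !ginvK.
  + by move=> a'; apply: ginj; rewrite ginvK hgphi finvK.
  + by move=> b'; apply: finj; rewrite finvK hfpsi ginvK.
- by rewrite /mor_comp /mor_id /=; congr pair; apply: funext2.
- by rewrite /mor_comp /mor_id /=; congr pair; apply: funext2.
Qed.
End Reflect.

Definition iota (M M' : moore) (h : tors2 (mA M) -> mod2 (mA M')) :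
  (mA M -> mA M') * (mB M -> mB M') :=
  (fun _ => 0, fun b => phibar M' (h (psibar M b))).

Section IotaLemmas.
Variables (M : moore) (F : facts M).
Lemma val_psibar b : val (psibar M b) = mpsi M b.
Proof. by rewrite /psibar insubdK2 // (psi2 F). Qed.
Lemma psibar_hom : is_hom (psibar M).
Proof. by move=> x y; apply: val_inj; rewrite valD_t !val_psibar (f_psi F). Qed.
Lemma phibar_hom : is_hom (phibar M).
Proof.
move=> x y; case: (pi2_surj x) => a ->; case: (pi2_surj y) => b ->.
by rewrite -pi2D !(phibar_pi F) (f_phi F).
Qed.
Lemma psibar_phi a : psibar M (mphi M a) = 0.
Proof. by apply: val_inj; rewrite val_psibar (f_psiphi F). Qed.
Lemma psi_phibar x : mpsi M (phibar M x) = 0.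
Proof. by case: (pi2_surj x) => a ->; rewrite (phibar_pi F) (f_psiphi F). Qed.
End IotaLemmas.

Lemma mod2_mapE (U V : zmodType) (f : U -> V) x : mod2_map f x = pi2 (f (repr x)).
Proof. by []. Qed.

Theorem corollary3p20 :
  (* alpha is full *)
  (forall M M' : moore, is_EMD M -> is_EMD M' ->
     forall f : mA M -> mA M', is_hom f ->
       exists g : mB M -> mB M', is_EMD_mor M M' (f, g)) /\
  (* alpha is essentially surjective *)
  (forall A : zmodType,
     exists M : moore, is_EMD M /\ exists f : mA M -> A, is_Ab_iso (mA M) A f) /\
  (* alpha reflects isomorphisms *)
  (forall M M' : moore, is_EMD M -> is_EMD M' ->
     forall m : (mA M -> mA M') * (mB M -> mB M'),
       is_EMD_mor M M' m -> is_Ab_iso (mA M) (mA M') m.1 -> is_EMD_iso M M' m) /\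
  (* natural short exact sequence
     0 -> Hom(A[2], A'/2) --iota--> EMD(M,M') --alpha--> Hom(A, A') -> 0 *)
  (exists iota : forall M M' : moore,
       (tors2 (mA M) -> mod2 (mA M')) -> (mA M -> mA M') * (mB M -> mB M'),
     (forall M M' : moore, is_EMD M -> is_EMD M' ->
       [/\ (* iota lands in EMD(M,M') *)
           forall h, is_hom h -> is_EMD_mor M M' (iota M M' h),
           (* iota is a group homomorphism *)
           forall h1 h2, is_hom h1 -> is_hom h2 ->
             iota M M' (fun x => h1 x + h2 x)
             = mor_add M M' (iota M M' h1) (iota M M' h2),
           (* iota is injective *)
           forall h1 h2, is_hom h1 -> is_hom h2 ->
             iota M M' h1 = iota M M' h2 -> h1 = h2,
           (* exactness in the middle: ker alpha = im iota *)
           forall m, is_EMD_mor M M' m ->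
             (m.1 = (fun _ => 0) <->
              exists h, is_hom h /\ iota M M' h = m)
         & (* alpha is surjective *)
           forall f : mA M -> mA M', is_hom f ->
             exists m, is_EMD_mor M M' m /\ m.1 = f]) /\
     (* naturality in M (contravariant) and M' (covariant) *)
     (forall N M M' N' : moore,
       is_EMD N -> is_EMD M -> is_EMD M' -> is_EMD N' ->
       forall (u : (mA N -> mA M) * (mB N -> mB M))
              (v : (mA M' -> mA N') * (mB M' -> mB N')),
         is_EMD_mor N M u -> is_EMD_mor M' N' v ->
         forall h : tors2 (mA M) -> mod2 (mA M'), is_hom h ->
           iota N N' (fun x => mod2_map v.1 (h (tors2_map u.1 x)))
           = mor_comp N M N' (mor_comp M M' N' v (iota M M' h)) u)).
Proof.
split.
  by move=> M M' HM HM' f hf; exact: (@full_exists M M' (EMD_facts HM) (EMD_facts HM') f hf).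
split; first exact: ess_surj.
split.
  by move=> M M' HM HM' m hm hi; exact: (@reflect_iso M M' (EMD_facts HM) (EMD_facts HM') m hm hi).
exists iota; split.
- move=> M M' HM HM'.
  have F := EMD_facts HM; have F' := EMD_facts HM'.
  case: (HM) => _ [inj sur ex]; case: (HM') => _ [inj' sur' ex'].
  split.
  + move=> h hh; split => /=.
    * by move=> ? ?; rewrite addr0.
    * apply: hom_comp; last exact: phibar_hom.
      by apply: hom_comp => //; exact: psibar_hom.
    * by move=> a; rewrite psibar_phi // (hom0 hh) (hom0 (phibar_hom F')) (hom0 (f_phi F')).
    * by move=> b; rewrite psi_phibar.
  + move=> h1 h2 _ _; rewrite /iota /mor_add /=; congr pair; apply: funext2 => x.
      by rewrite addr0.
    by rewrite (phibar_hom F').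
  + move=> h1 h2 _ _ [e]; apply: funext2 => t.
    have [b hb] := sur t; apply: inj'; rewrite -hb.
    exact: (congr1 (fun k => k b) e).
  + move=> [m1 m2] [/= hm1 hm2 hgphi hfpsi]; split => /=; last by case=> h [_]; rewrite /iota; case=> <- _.
    move=> e1; subst m1.
    pose bt t := projT1 (cid (sur t)).
    have hbt t : psibar M (bt t) = t := projT2 (cid (sur t)).
    have hx b : exists x, phibar M' x = m2 b.
      apply/ex'; apply: val_inj; rewrite (val_psibar F') -hfpsi.
      by [].
    pose h t := projT1 (cid (hx (bt t))).
    have hh t : phibar M' (h t) = m2 (bt t) := projT2 (cid (hx (bt t))).
    have key b : phibar M' (h (psibar M b)) = m2 b.
      rewrite hh; apply/eqP; rewrite -subr_eq0 -(homB hm2); apply/eqP.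
      have : psibar M (bt (psibar M b) - b) = 0 by rewrite (homB (psibar_hom F)) hbt subrr.
      case/ex => x <-; case: (pi2_surj x) => a ->.
      by rewrite (phibar_pi F) hgphi (hom0 (f_phi F')).
    exists h; split.
      move=> s t; apply: inj'; rewrite (phibar_hom F').
      have := key (bt s + bt t); rewrite (psibar_hom F) !hbt => ->.
      by rewrite hm2 !hh.
    by rewrite /iota; congr pair; apply: funext2 => b; exact: key.
  + by move=> f hf; have [g hg] := @full_exists M M' F F' f hf; exists (f, g).
- move=> N M M' N' HN HM HM' HN' u v hu hv h hh.
  have FN := EMD_facts HN; have FM := EMD_facts HM.
  have FM' := EMD_facts HM'; have FN' := EMD_facts HN'.
  case: hu => hu1 hu2 hu3 hu4; case: hv => hv1 hv2 hv3 hv4.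
  rewrite /iota /mor_comp /=; congr pair; apply: funext2 => x /=.
    by rewrite (hom0 hv1).
  have e1 : tors2_map u.1 (psibar N x) = psibar M (u.2 x).
    apply: val_inj; rewrite (val_psibar FM) -hu4 /tors2_map insubdK2 (val_psibar FN) //.
    by rewrite -(homMn hu1) (psi2 FN) (hom0 hu1).
  rewrite e1; case: (pi2_surj (h (psibar M (u.2 x)))) => a ->.
  by rewrite mod2_mapE (phibar_pi FN') /phibar hv3.
Qed.
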